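(* Let $A\in\mathbb{C}^{n\times n}$ with $k=\mathrm{Ind}(A)$, and let $m\in\mathbb{N}=\{1,2,\dots\}$. Then: (a) $A^{\#_m}=(A^{\mathrm{cEP}})^{m+1}A^mP_{A^m}$; (b) $A^{\#_m}=(A^{\mathrm{WG}})^mA^{m-1}P_{A^m}$; (c) $AA^{\#_m}=(A^{\mathrm{cEP}})^mA^mP_{A^m}=A^{\mathrm{WG}_{m-1}}AP_{A^m}$; (d) $A^{\#_m}A=(A^{\mathrm{cEP}})^{m+1}A^mP_{A^m}A$; (e) $A^{\#_m}A^m=A^{\mathrm{WG}_m}A^m=(A^{\mathrm{cEP}})^{m+1}A^{2m}$; (f) for every $Y\in\mathbb{C}^{n\times n}$ with $YAY=Y$ and $\mathcal{R}(Y)=\mathcal{R}(A^k)$, one has $A^{\#_m}=YAA^{\#_m}$.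
   Context: For $A\in\mathbb{C}^{n\times n}$: $A^\dagger$ is the Moore–Penrose inverse, $\mathcal{R}(\cdot)$ and $\mathcal{N}(\cdot)$ denote column space and null space, $P_A=AA^\dagger$, and $A^0=I_n$. The index $\mathrm{Ind}(A)$ is the smallest nonnegative integer $k$ with $\mathcal{R}(A^k)=\mathcal{R}(A^{k+1})$. The core-EP inverse $A^{\mathrm{cEP}}$ is the unique $X\in\mathbb{C}^{n\times n}$ with $XAX=X$ and $\mathcal{R}(X)=\mathcal{R}(X^* )=\mathcal{R}(A^k)$, $k=\mathrm{Ind}(A)$. For an integer $j\ge 0$, the $j$-weak group inverse is $A^{\mathrm{WG}_j}:=(A^{\mathrm{cEP}})^{j+1}A^j$; the WG inverse is $A^{\mathrm{WG}}:=A^{\mathrm{WG}_1}=(A^{\mathrm{cEP}})^2A$. For $m\in\mathbb{N}$, the $m$-weak core inverse of $A$ is $A^{\#_m}:=A^{\mathrm{WG}_m}P_{A^m}$. *)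

(* Defs.v *)
From HB Require Import structures.
From mathcomp Require Import all_boot all_order all_algebra all_field.
From Stdlib Require Import ClassicalEpsilon.
Set Implicit Arguments. Unset Strict Implicit. Unset Printing Implicit Defensive.
Import GRing.Theory Num.Theory.
Local Open Scope ring_scope.

(* Complex n x n matrices are modelled over algC (algebraic complex numbers),
   an algebraically closed numeric field with complex conjugation. *)

Definition ctr n (A : 'M[algC]_n) : 'M[algC]_n := (map_mx Num.conj A)^T.

(* column-space equality R(A) = R(B) (column spaces = row spaces of transposes) *)
Definition colsp_eq n (A B : 'M[algC]_n) : Prop := (A^T == B^T)%MS.

Definition is_MP n (A X : 'M[algC]_n) : Prop :=
  [/\ A *m X *m A = A, X *m A *m X = X,
      ctr (A *m X) = A *m X & ctr (X *m A) = X *m A].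

Definition mp n (A : 'M[algC]_n) : 'M[algC]_n :=
  epsilon (inhabits 0) (fun X => is_MP A X).

Definition P n (A : 'M[algC]_n) : 'M[algC]_n := A *m mp A.

Definition is_index n (A : 'M[algC]_n) (k : nat) : Prop :=
  colsp_eq (A ^+ k) (A ^+ k.+1) /\
  (forall j : nat, (j < k)%N -> ~ colsp_eq (A ^+ j) (A ^+ j.+1)).

Definition Ind n (A : 'M[algC]_n) : nat :=
  epsilon (inhabits 0%N) (fun k => is_index A k).

Definition is_cEP n (A X : 'M[algC]_n) : Prop :=
  [/\ X *m A *m X = X, colsp_eq X (A ^+ Ind A) & colsp_eq (ctr X) (A ^+ Ind A)].

Definition cEP n (A : 'M[algC]_n) : 'M[algC]_n :=
  epsilon (inhabits 0) (fun X => is_cEP A X).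

Definition WGj n (j : nat) (A : 'M[algC]_n) : 'M[algC]_n :=
  cEP A ^+ j.+1 *m A ^+ j.

Definition WG n (A : 'M[algC]_n) : 'M[algC]_n := WGj 1 A.

Definition wcore n (m : nat) (A : 'M[algC]_n) : 'M[algC]_n :=
  WGj m A *m P (A ^+ m).

(* Main.v *)
Require Import Defs.
From HB Require Import structures.
From mathcomp Require Import all_boot all_order all_algebra all_field.
From Stdlib Require Import ClassicalEpsilon.
From mathcomp Require Import zify.
Import GRing.Theory Num.Theory.
Local Open Scope ring_scope.
Set Implicit Arguments. Unset Strict Implicit. Unset Printing Implicit Defensive.

Definition ct p q (M : 'M[algC]_(p, q)) : 'M[algC]_(q, p) := (map_mx Num.conj M)^T.

Lemma ctrE n (M : 'M[algC]_n) : ctr M = ct M. Proof. by []. Qed.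

Lemma ct_mul p q r (A : 'M[algC]_(p, q)) (B : 'M[algC]_(q, r)) :
  ct (A *m B) = ct B *m ct A.
Proof. by rewrite /ct map_mxM trmx_mul. Qed.

Lemma ctK p q (A : 'M[algC]_(p, q)) : ct (ct A) = A.
Proof. by rewrite /ct map_trmx trmxK map_mxCK. Qed.

Lemma ct_inv p (A : 'M[algC]_p) : ct (invmx A) = invmx (ct A).
Proof. by rewrite /ct map_invmx trmx_inv. Qed.

Lemma rank_ct p q (A : 'M[algC]_(p, q)) : \rank (ct A) = \rank A.
Proof. by rewrite /ct mxrank_tr mxrank_map. Qed.

Lemma ct_eq0 p q (M : 'M[algC]_(p, q)) : M *m ct M = 0 -> M = 0.
Proof.
move=> H; apply/matrixP => i j; rewrite mxE.
have := congr1 (fun N : 'M[algC]_p => N i i) H; rewrite !mxE.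
move=> H2.
have H4 : \sum_(k < q) M i k * (M i k)^* = 0.
  rewrite -[RHS]H2; apply: eq_bigr => k _; by rewrite /ct !mxE.
have := @psumr_eq0P _ _ xpredT (fun k => M i k * (M i k)^*) (fun k _ => mul_conjC_ge0 (M i k)) H4 j isT.
by move=> /eqP; rewrite mul_conjC_eq0 => /eqP.
Qed.

Lemma rank_mul_ct p q (M : 'M[algC]_(p, q)) : \rank (M *m ct M) = \rank M.
Proof.
have le1 := mxrankM_maxl M (ct M).
have : (kermx (M *m ct M) <= kermx M)%MS.
  rewrite sub_kermx; apply/eqP; apply: ct_eq0.
  by rewrite ct_mul mulmxA -(mulmxA _ M) mulmx_ker mul0mx.
move/mxrankS; rewrite !mxrank_ker.
have := rank_leq_row M; have := rank_leq_row (M *m ct M). move: le1. set a := \rank (M *m ct M). set b := \rank M. lia.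
Qed.

Lemma ct_unit_l p q (G : 'M[algC]_(p, q)) : \rank G = p -> G *m ct G \in unitmx.
Proof. by move=> h; rewrite -row_free_unit /row_free rank_mul_ct h. Qed.

Lemma ct_unit_r p q (F : 'M[algC]_(p, q)) : \rank F = q -> ct F *m F \in unitmx.
Proof. by move=> h; rewrite -{2}(ctK F) ct_unit_l // rank_ct. Qed.

Lemma mp_fact n r (F : 'M[algC]_(n, r)) (G : 'M[algC]_(r, n)) :
  \rank F = r -> \rank G = r -> exists X, is_MP (F *m G) X.
Proof.
move=> rF rG.
have uU := ct_unit_l rG; have uV := ct_unit_r rF.
set U := G *m ct G in uU *; set V := ct F *m F in uV *.
have hU : ct U = U by rewrite /U ct_mul ctK.
have hV : ct V = V by rewrite /V ct_mul ctK.
exists (ct G *m invmx U *m invmx V *m ct F).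
have eAX : F *m G *m (ct G *m invmx U *m invmx V *m ct F) = F *m invmx V *m ct F.
  by rewrite !mulmxA -(mulmxA F G) -/U -(mulmxA F U) mulmxV // mulmx1.
have eXA : (ct G *m invmx U *m invmx V *m ct F) *m (F *m G) = ct G *m invmx U *m G.
  by rewrite !mulmxA -[_ *m ct F *m F]mulmxA -/V -[_ *m invmx V *m V]mulmxA mulVmx // mulmx1.
split.
- by rewrite eAX -!mulmxA [ct F *m _]mulmxA -/V (mulmxA (invmx V)) mulVmx // mul1mx.
- by rewrite eXA !mulmxA -[_ *m G *m ct G]mulmxA -/U -[ct G *m invmx U *m U]mulmxA mulVmx // mulmx1.
- by rewrite ctrE eAX !ct_mul ctK ct_inv hV mulmxA.
- by rewrite ctrE eXA !ct_mul ctK ct_inv hU mulmxA.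
Qed.

Lemma mp_exists n (A : 'M[algC]_n) : exists X, is_MP A X.
Proof.
have rF : \rank (col_base A) = \rank A by have := col_base_full A; rewrite /row_full => /eqP.
have rG : \rank (row_base A) = \rank A by have := row_base_free A; rewrite /row_free => /eqP.
by have := mp_fact rF rG; rewrite mulmx_base.
Qed.

Lemma mpP n (A : 'M[algC]_n) : is_MP A (mp A).
Proof. rewrite /mp; case: (mp_exists A) => X hX. exact: (epsilon_spec (inhabits 0) (fun X => is_MP A X) (ex_intro _ X hX)). Qed.

Lemma colP n (M N : 'M[algC]_n) : (M^T <= N^T)%MS -> exists W, M = N *m W.
Proof. by case/submxP => D hD; exists D^T; rewrite -[M]trmxK hD trmx_mul trmxK. Qed.

Lemma colI n (N W : 'M[algC]_n) : ((N *m W)^T <= N^T)%MS.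
Proof. by rewrite trmx_mul submxMl. Qed.

Lemma col_eq n (M N : 'M[algC]_n) :
  (M^T <= N^T)%MS -> (\rank N <= \rank M)%N -> colsp_eq M N.
Proof.
move=> h r; rewrite /colsp_eq; apply/andP; split => //.
by rewrite -(geq_leqif (mxrank_leqif_sup h)) !mxrank_tr.
Qed.

Lemma colsp_rank n (M N : 'M[algC]_n) : colsp_eq M N -> \rank M = \rank N.
Proof. by move/eqmx_rank; rewrite !mxrank_tr. Qed.

Lemma colsp_sub n (M N : 'M[algC]_n) : colsp_eq M N -> (M^T <= N^T)%MS /\ (N^T <= M^T)%MS.
Proof. by move/andP. Qed.

Lemma powS_col n (A : 'M[algC]_n) j : ((A ^+ j.+1)^T <= (A ^+ j)^T)%MS.
Proof. by rewrite exprSr -mulmxE colI. Qed.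

Lemma index_exists n (A : 'M[algC]_n) : exists k, colsp_eq (A ^+ k) (A ^+ k.+1).
Proof.
apply: NNPP => hn.
have H : forall j, (\rank (A ^+ j) + j <= n)%N.
  elim=> [|j IH]; first by rewrite expr0 addn0 rank_leq_row.
  have hlt : (\rank (A ^+ j.+1) < \rank (A ^+ j))%N.
    rewrite -!(mxrank_tr (A ^+ _)) (ltn_leqif (mxrank_leqif_sup (powS_col A j))).
    apply/negP => h; apply: hn; exists j; apply: col_eq; first exact: h.
    by rewrite -!(mxrank_tr (A ^+ _)) mxrankS // powS_col.
  lia.
by have := H n.+1; lia.
Qed.

Lemma index_spec n (A : 'M[algC]_n) : is_index A (Ind A).
Proof.
have ex : exists k, is_index A k.
  have hex := index_exists A.
  pose p := fun k => (((A ^+ k)^T == (A ^+ k.+1)^T)%MS).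
  have hp : exists k, p k by [].
  case: (ex_minnP hp) => k hk hmin; exists k; split => // j hj hc.
  by have := hmin j hc; lia.
rewrite /Ind; case: ex => k hk.
exact: (epsilon_spec (inhabits 0%N) (fun k => is_index A k) (ex_intro _ k hk)).
Qed.

Lemma cEP_exists n (A : 'M[algC]_n) : exists X, is_cEP A X.
Proof.
have [hidx _] := index_spec A.
set k := Ind A in hidx *.
set B := A ^+ k in hidx *.
have eC1 : A ^+ k.+1 = A *m B by rewrite exprS mulmxE.
have eC2 : A ^+ k.+1 = B *m A by rewrite exprSr mulmxE.
set C := A ^+ k.+1 in hidx eC1 eC2 *.
have [h1 h2 h3 h4] := mpP C.
set D := mp C in h1 h2 h3 h4 *.
have rBC := colsp_rank hidx.
exists (B *m D).
have rX : (\rank B <= \rank (B *m D))%N.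
  rewrite rBC -{1}h1; apply: leq_trans (mxrankM_maxl _ _) _.
  by rewrite eC1 -mulmxA mxrankM_maxr.
split.
- by rewrite -!mulmxA (mulmxA A) -eC1 (mulmxA D) h2.
- by apply: col_eq => //; rewrite colI.
- have e : ct (B *m D) = B *m (A *m (D *m ct D *m ct B)).
    have eD : ct D = C *m (D *m ct D).
      by rewrite -{1}h2 -mulmxA ct_mul -ctrE h3 mulmxA.
    by rewrite ct_mul {1}eD eC2 -!mulmxA.
  by rewrite ctrE; apply: col_eq; rewrite ?e ?colI // -e rank_ct.
Qed.

Lemma cEP_spec n (A : 'M[algC]_n) : is_cEP A (cEP A).
Proof.
rewrite /cEP; case: (cEP_exists A) => X hX.
exact: (epsilon_spec (inhabits 0) (fun X => is_cEP A X) (ex_intro _ X hX)).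
Qed.

Lemma cEP_AXX n (A : 'M[algC]_n) : A *m cEP A *m cEP A = cEP A.
Proof.
have [h1 h2 _] := cEP_spec A.
set X := cEP A in h1 h2 *; set B := A ^+ Ind A in h2 *.
have [s1 s2] := colsp_sub h2.
have [W eW] := colP s1.
have s3 : ((A *m X)^T <= B^T)%MS.
  by rewrite eW mulmxA mulmxE -exprS exprSr -mulmxE -mulmxA colI.
have rr : (\rank B <= \rank (A *m X))%N.
  rewrite -(colsp_rank h2) -{1}h1 -mulmxA; exact: mxrankM_maxr.
have [_ s4] := colsp_sub (col_eq s3 rr).
have [W2 eW2] := colP (submx_trans s1 s4).
have -> : A *m X *m X = A *m X *m (A *m X *m W2) by rewrite -eW2.
by rewrite !mulmxA -(mulmxA A X A) -(mulmxA A (X *m A) X) h1 -eW2.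
Qed.

Lemma WGpow n (X A : 'M[algC]_n) : X * A * X = X ->
  forall j, (X ^+ 2 * A) ^+ j.+1 = X ^+ j.+2 * A.
Proof.
move=> h; elim=> [|j IH]; first by rewrite expr1.
rewrite exprSr IH expr2 !mulrA (exprSr X j.+1) -(mulrA (X ^+ j.+1) X A).
rewrite -(mulrA (X ^+ j.+1) (X * A) X) h -exprSr -exprSr //.
Qed.

Theorem theorem4p5 (n : nat) (A : 'M[algC]_n) (m : nat) (hm : (0 < m)%N) :
  (* (a) *)
  (
      wcore m A = cEP A ^+ m.+1 *m A ^+ m *m P (A ^+ m)) /\
      (* (b) *)
  (
      wcore m A = WG A ^+ m *m A ^+ m.-1 *m P (A ^+ m)) /\
      (* (c) *)
  (
      A *m wcore m A = cEP A ^+ m *m A ^+ m *m P (A ^+ m) /\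
      cEP A ^+ m *m A ^+ m *m P (A ^+ m) = WGj m.-1 A *m A *m P (A ^+ m)) /\
      (* (d) *)
  (
      wcore m A *m A = cEP A ^+ m.+1 *m A ^+ m *m P (A ^+ m) *m A) /\
      (* (e) *)
  (
      wcore m A *m A ^+ m = WGj m A *m A ^+ m /\
      WGj m A *m A ^+ m = cEP A ^+ m.+1 *m A ^+ (2 * m)) /\
    (* (f) *)
  (
      forall Y : 'M[algC]_n,
        Y *m A *m Y = Y -> colsp_eq Y (A ^+ Ind A) ->
        wcore m A = Y *m A *m wcore m A).
Proof.
have [h1 h2 _] := cEP_spec A.
have hAXX := cEP_AXX A.
rewrite /wcore /WG /WGj /P.
set X := cEP A in h1 h2 hAXX *.
have [s1 _] := colsp_sub h2.
have [p1 _ _ _] := mpP (A ^+ m).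
move: (mp (A ^+ m)) p1 => M p1.
rewrite !mulmxE in h1 hAXX p1 *.
case: m hm p1 => // m' _ p1.
have -> : m'.+1.-1 = m' by [].
split; first by [].
split; first by rewrite WGpow // expr1 -(mulrA (X ^+ m'.+2) A) -exprS.
split; first split.
- by rewrite [X ^+ m'.+2]exprS [X ^+ m'.+1]exprS !mulrA hAXX.
- by rewrite -(mulrA _ (A ^+ m') A) -exprSr.
split; first by rewrite !mulrA.
split; first split.
- by rewrite -!mulrA (mulrA (A ^+ m'.+1) M) p1.
- by rewrite -mulrA -exprD mul2n addnn.
move=> Y hY hYc.
have [_ t2] := colsp_sub hYc.
have [W eW] := colP (submx_trans s1 t2).
rewrite mulmxE in eW.
have e : X ^+ m'.+2 * A ^+ m'.+1 * (A ^+ m'.+1 * M) =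
  Y * (W * (X ^+ m'.+1 * A ^+ m'.+1 * (A ^+ m'.+1 * M))).
  by rewrite exprS {1}eW !mulrA.
by rewrite e (mulrA (Y * A) Y) hY.
Qed.
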